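(* For every distributed theory $\mathcal T$ and every universally consistent distributed belief pair $\mathcal B$, $\tau_{\mathit{beliefpair}}(D^*_{\mathcal T}(\mathcal B))=D^*_{\tau_{\mathit{theory}}(\mathcal T)}(\tau_{\mathit{beliefpair}}(\mathcal B))$.
   Context: Standing setup (dAEL). $\Sigma=\Sigma_o\uplus\Sigma_s$ is a first-order vocabulary (objective and subjective symbols). A nonempty domain $D$ and a $\Sigma_o$-structure $I_o$ with domain $D$ are fixed, as is a set of agents $\mathcal{A}\subseteq D$. For each $A\in\mathcal{A}$ there is a constant $A\in\Sigma_o$ with $A^{I_o}=A$, and $\Sigma_o$ contains a unary predicate $\mathrm{Apred}$ with $\mathrm{Apred}^{I_o}=\mathcal{A}$. ''Structure'' means a $\Sigma$-structure with domain $D$ that agrees with $I_o$ on $\Sigma_o$. Formulas of dAEL are built from atoms $P(\bar t)$ ($P\in\Sigma$ or equality) using $\wedge,\neg,\forall x$, and the modal rule: if $\varphi$ is a formula and $t$ a term then $K_t\varphi$ is a formula. Truth values are $\mathbf t,\mathbf f,\mathbf u$ with truth order $\mathbf f<_t\mathbf u<_t\mathbf t$; $\mathbf t^{-1}=\mathbf f$, $\mathbf f^{-1}=\mathbf t$, $\mathbf u^{-1}=\mathbf u$. A possible world structure (PWS) is a set of structures. A distributed possible world structure (DPWS) is a family $\mathcal Q=(\mathcal Q_A)_{A\in\mathcal A}$ of PWSs. A distributed belief pair (DBP) is a pair $\mathcal B=(\mathcal B^c,\mathcal B^l)$ of DPWSs, consistent if $\mathcal B^l_A\subseteq\mathcal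 B^c_A$ for all $A$ (DBPs are tacitly consistent). A DPWS $\mathcal Q$ is universally consistent if $\mathcal Q_A\ne\emptyset$ for all $A$; a DBP $\mathcal B$ is universally consistent if $\mathcal B^l$ is. Three-valued value $\varphi^{\mathcal B,I,a}$: atoms get their two-valued value in $I$; $\neg$ by ${}^{-1}$, $\wedge$ and $\forall$ by $\le_t$-glb (Kleene); $(K_t\varphi)^{\mathcal B,I,a}$ is $\mathbf t$ if $t^{I,a}\in\mathcal A$ and $\varphi^{\mathcal B,J,a}=\mathbf t$ for all $J\in\mathcal B^c_{t^{I,a}}$; $\mathbf f$ if $t^{I,a}\notin\mathcal A$ or $\varphi^{\mathcal B,J,a}=\mathbf f$ for some $J\in\mathcal B^l_{t^{I,a}}$; $\mathbf u$ otherwise; for sentences the assignment is omitted and the value of a set of sentences is the $\le_t$-glb of the members' values. A distributed theory is a family $\mathcal T=(\mathcal T_A)_{A\in\mathcal A}$ of sets of dAEL sentences; $D^*_{\mathcal T}(\mathcal B)=(D^c_{\mathcal T}(\mathcal B),D^l_{\mathcal T}(\mathcal B))$ with $D^c_{\mathcal T}(\mathcal B)_A=\{I:\mathcal T_A^{\mathcal B,I}\ne\mathbf f\}$ and $D^l_{\mathcal T}(\mathcal B)_A=\{I:\mathcal T_A^{\mathcal B,I}=\mathbf t\}$. Translation to AEL. $\Sigma'$ consists of all symbols of $\Sigma_o$ and all symbols of $\Sigma_s$ with arity increased by one. A fixed element $\delta\in D$ is chosen. A $\Sigma'$-structure always has domain $D$, agrees with $I_o$ on $\Sigma_o$, and is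 normal: for every $f\in\Sigma_s$, $f^J(\bar d,d)=\delta$ whenever $d\notin\mathcal A$, and for every relation $R\in\Sigma_s$, $(\bar d,d)\notin R^J$ whenever $d\notin\mathcal A$. AEL formulas over $\Sigma'$ are built like dAEL formulas but with a single unindexed modal operator $K$; an AEL belief pair is a pair $(P,S)$ of sets of $\Sigma'$-structures; the three-valued AEL value is defined like the dAEL one except that $(K\varphi)^{(P,S),J,a}$ is $\mathbf t$ if $\varphi$ has value $\mathbf t$ at all $J'\in P$, $\mathbf f$ if it has value $\mathbf f$ at some $J'\in S$, and $\mathbf u$ otherwise. For an AEL theory $T$, $D^*_T(P,S)=(\{J:T^{(P,S),J}\ne\mathbf f\},\{J:T^{(P,S),J}=\mathbf t\})$. For a $\Sigma$-term $t$ and $\Sigma'$-term $s$, $t_s$ is defined by $x_s=x$ for variables, $f(t_1,\dots,t_n)_s=f((t_1)_s,\dots,(t_n)_s,s)$ for $f\in\Sigma_s$, $f(t_1,\dots,t_n)_s=f((t_1)_s,\dots,(t_n)_s)$ for $f\in\Sigma_o$. $\tau_{\mathit{formula}}(s,\cdot)$: $P(t_1,\dots,t_n)\mapsto P((t_1)_s,\dots,(t_n)_s,s)$ if $P\in\Sigma_s$, $P((t_1)_s,\dots,(t_n)_s)$ if $P\in\Sigma_o$ or equality; commutes with $\neg,\wedge,\forall x$; $\tau_{\mathit{formula}}(s,K_t\phi)=\exists x(x=t_s\wedge\mathrm{Apred}(x)\wedge K\,\tau_{\mathit{formula}}(x,\phi))$ for a fresh variable $x$. $\tau_{\mathit{theory}}(\mathcal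 T)=\bigcup_{A\in\mathcal A}\{\tau_{\mathit{formula}}(A,\phi):\phi\in\mathcal T_A\}$. For a family $(I_A)_{A\in\mathcal A}$ of structures, $\tau_{\mathit{structure}}((I_A)_A)$ is the $\Sigma'$-structure interpreting $\Sigma_o$ as $I_o$, each $f\in\Sigma_s$ by $f(\bar d,d)=f^{I_d}(\bar d)$ if $d\in\mathcal A$ and $\delta$ otherwise, and each relation $R\in\Sigma_s$ by $(\bar d,d)\in R$ iff $d\in\mathcal A$ and $\bar d\in R^{I_d}$. $\tau_{\mathit{pws}}(\mathcal Q)=\{\tau_{\mathit{structure}}((I_A)_A): I_A\in\mathcal Q_A\text{ for all }A\in\mathcal A\}$, and $\tau_{\mathit{beliefpair}}(\mathcal B)=(\tau_{\mathit{pws}}(\mathcal B^c),\tau_{\mathit{pws}}(\mathcal B^l))$. *)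

(* Defs.v *)
From Stdlib Require Import Arith List Classical ClassicalEpsilon.
Set Warnings "-warn-library-file-stdlib-vector".
From Stdlib Require Vector.
Import Vector.VectorNotations.

(* Symbols: function symbols [Fs] (constants = arity 0) and relation symbols
   [Rs]; each with an arity and a flag "subjective" (true: in Sigma_s,
   false: in Sigma_o).  Equality is a built-in logical symbol. *)
Record Setup := {
  D : Type;
  Fs : Type;
  Rs : Type;
  far : Fs -> nat;
  rar : Rs -> nat;
  fsubj : Fs -> bool;
  rsubj : Rs -> bool;
  (* the fixed Sigma_o-structure I_o (its values on subjective symbols are
     irrelevant and never used) *)
  Iof : forall f : Fs, Vector.t D (far f) -> D;
  Ior : forall r : Rs, Vector.t D (rar r) -> Prop;
  agent : D -> Prop;
  acon : D -> Fs;
  acon_obj : forall A, agent A -> fsubj (acon A) = false;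
  acon_ar : forall A, agent A -> far (acon A) = 0;
  acon_int : forall A, agent A -> forall v, Iof (acon A) v = A;
  Apred : Rs;
  Apred_obj : rsubj Apred = false;
  Apred_ar : rar Apred = 1;
  Apred_int : forall d : D, Ior Apred (Vector.const d (rar Apred)) <-> agent d;
  delta : D
}.

Set Implicit Arguments.

Section DAEL.
Variable Σ : Setup.

Local Notation D := (D Σ).
Local Notation Fs := (Fs Σ).
Local Notation Rs := (Rs Σ).
Local Notation far := (far Σ).
Local Notation rar := (rar Σ).
Local Notation fsubj := (fsubj Σ).
Local Notation rsubj := (rsubj Σ).
Local Notation agent := (agent Σ).
Local Notation delta := (delta Σ).

Definition EM (P : Prop) : {P} + {~ P} := excluded_middle_informative P.

Definition far' (f : Fs) : nat := if fsubj f then S (far f) else far f.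
Definition rar' (r : Rs) : nat := if rsubj r then S (rar r) else rar r.

Inductive term (fa : Fs -> nat) : Type :=
| Var : nat -> term fa
| App : forall f : Fs, Vector.t (term fa) (fa f) -> term fa.
Arguments Var {fa}.
Arguments App {fa}.

Record Str (fa : Fs -> nat) (ra : Rs -> nat) := {
  fint : forall f : Fs, Vector.t D (fa f) -> D;
  rint : forall r : Rs, Vector.t D (ra r) -> Prop
}.
Arguments fint {fa ra}.
Arguments rint {fa ra}.

Definition SStr := Str far rar.
Definition SStr' := Str far' rar'.

Definition is_structure (I : SStr) : Prop :=
  (forall f, fsubj f = false -> forall v, fint I f v = Iof Σ f v) /\
  (forall r, rsubj r = false -> forall v, rint I r v <-> Ior Σ r v).

(* Sigma'-structure: agrees with I_o on Sigma_o and is normal *)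
Definition fcond' (f : Fs) : (Vector.t D (far' f) -> D) -> Prop :=
  match fsubj f as b
        return (Vector.t D (if b then S (far f) else far f) -> D) -> Prop with
  | true => fun g => forall v, ~ agent (Vector.last v) -> g v = delta
  | false => fun g => forall v, g v = Iof Σ f v
  end.
Definition rcond' (r : Rs) : (Vector.t D (rar' r) -> Prop) -> Prop :=
  match rsubj r as b
        return (Vector.t D (if b then S (rar r) else rar r) -> Prop) -> Prop with
  | true => fun g => forall v, ~ agent (Vector.last v) -> ~ g v
  | false => fun g => forall v, g v <-> Ior Σ r v
  end.
Definition is_structure' (J : SStr') : Prop :=
  (forall f, fcond' f (fint J f)) /\ (forall r, rcond' r (rint J r)).

Fixpoint teval {fa ra} (I : Str fa ra) (a : nat -> D) (t : term fa) : D :=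
  match t with
  | Var x => a x
  | App f v => fint I f (Vector.map (teval I a) v)
  end.

Definition upd (a : nat -> D) (x : nat) (d : D) : nat -> D :=
  fun y => if Nat.eqb y x then d else a y.

Inductive tv := tt_ | ff_ | uu_.
Definition tinv (v : tv) : tv :=
  match v with tt_ => ff_ | ff_ => tt_ | uu_ => uu_ end.
Definition tglb {X : Type} (P : X -> Prop) (g : X -> tv) : tv :=
  if EM (forall x, P x -> g x = tt_) then tt_
  else if EM (exists x, P x /\ g x = ff_) then ff_ else uu_.
Definition tmin (v w : tv) : tv := tglb (fun _ : bool => True) (fun b => if b then v else w).
Definition tbool (P : Prop) : tv := if EM P then tt_ else ff_.

Inductive dform : Type :=
| dRel : forall r : Rs, Vector.t (term far) (rar r) -> dform
| dEq : term far -> term far -> dform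
| dNeg : dform -> dform
| dAnd : dform -> dform -> dform
| dAll : nat -> dform -> dform
| dK : term far -> dform -> dform.

Inductive aform : Type :=
| aRel : forall r : Rs, Vector.t (term far') (rar' r) -> aform
| aEq : term far' -> term far' -> aform
| aNeg : aform -> aform
| aAnd : aform -> aform -> aform
| aAll : nat -> aform -> aform
| aK : aform -> aform.

Definition aEx (x : nat) (p : aform) : aform := aNeg (aAll x (aNeg p)).

Fixpoint tfree {fa} (x : nat) (t : term fa) : Prop :=
  match t with
  | Var y => x = y
  | App f v => Vector.fold_right (fun u P => tfree x u \/ P) v False
  end.
Fixpoint dfree (x : nat) (p : dform) : Prop :=
  match p with
  | dRel r v => Vector.fold_right (fun u P => tfree x u \/ P) v False
  | dEq t1 t2 => tfree x t1 \/ tfree x t2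
  | dNeg q => dfree x q
  | dAnd q1 q2 => dfree x q1 \/ dfree x q2
  | dAll y q => x <> y /\ dfree x q
  | dK t q => tfree x t \/ dfree x q
  end.
Definition dsentence (p : dform) : Prop := forall x, ~ dfree x p.

Definition PWS := SStr -> Prop.
Definition DPWS := D -> PWS.           (* only the values at agents matter *)
Definition DBP := (DPWS * DPWS)%type.  (* (B^c, B^l) *)

Definition DBP_consistent (B : DBP) : Prop :=
  forall A, agent A -> forall I, snd B A I -> fst B A I.
Definition DBP_structures (B : DBP) : Prop :=
  forall A, agent A -> forall I, (fst B A I \/ snd B A I) -> is_structure I.
Definition DBP_univ_consistent (B : DBP) : Prop :=
  forall A, agent A -> exists I, snd B A I.

Fixpoint dval (B : DBP) (p : dform) (I : SStr) (a : nat -> D) : tv :=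
  match p with
  | dRel r v => tbool (rint I r (Vector.map (teval I a) v))
  | dEq t1 t2 => tbool (teval I a t1 = teval I a t2)
  | dNeg q => tinv (dval B q I a)
  | dAnd q1 q2 => tmin (dval B q1 I a) (dval B q2 I a)
  | dAll x q => tglb (fun _ : D => True) (fun d => dval B q I (upd a x d))
  | dK t q =>
      let d := teval I a t in
      if EM (agent d /\ forall J, fst B d J -> dval B q J a = tt_) then tt_
      else if EM (~ agent d \/ exists J, snd B d J /\ dval B q J a = ff_) then ff_
      else uu_
  end.

(* value of a sentence: the assignment is irrelevant; we use the constant one *)
Definition a0 : nat -> D := fun _ => delta.

Definition dtheory := D -> dform -> Prop.  (* T_A, only agents matter *)
Definition dtheory_sentences (T : dtheory) : Prop :=
  forall A, agent A -> forall p, T A p -> dsentence p.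

Definition dset_val (B : DBP) (TA : dform -> Prop) (I : SStr) : tv :=
  tglb TA (fun p => dval B p I a0).

Definition Dstar (T : dtheory) (B : DBP) : DBP :=
  (fun A I => is_structure I /\ dset_val B (T A) I <> ff_,
   fun A I => is_structure I /\ dset_val B (T A) I = tt_).

Definition ABP := ((SStr' -> Prop) * (SStr' -> Prop))%type.

Fixpoint aval (PS : ABP) (p : aform) (J : SStr') (a : nat -> D) : tv :=
  match p with
  | aRel r v => tbool (rint J r (Vector.map (teval J a) v))
  | aEq t1 t2 => tbool (teval J a t1 = teval J a t2)
  | aNeg q => tinv (aval PS q J a)
  | aAnd q1 q2 => tmin (aval PS q1 J a) (aval PS q2 J a)
  | aAll x q => tglb (fun _ : D => True) (fun d => aval PS q J (upd a x d))
  | aK q =>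
      if EM (forall J', fst PS J' -> aval PS q J' a = tt_) then tt_
      else if EM (exists J', snd PS J' /\ aval PS q J' a = ff_) then ff_
      else uu_
  end.

Definition aset_val (PS : ABP) (T : aform -> Prop) (J : SStr') : tv :=
  tglb T (fun p => aval PS p J a0).

Definition Dstar' (T : aform -> Prop) (PS : ABP) : ABP :=
  (fun J => is_structure' J /\ aset_val PS T J <> ff_,
   fun J => is_structure' J /\ aset_val PS T J = tt_).

Definition fadj {X : Type} (f : Fs) (s : X) : Vector.t X (far f) -> Vector.t X (far' f) :=
  match fsubj f as b return Vector.t X (far f) -> Vector.t X (if b then S (far f) else far f) with
  | true => fun w => Vector.shiftin s w
  | false => fun w => w
  end.
Definition radj {X : Type} (r : Rs) (s : X) : Vector.t X (rar r) -> Vector.t X (rar' r) :=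
  match rsubj r as b return Vector.t X (rar r) -> Vector.t X (if b then S (rar r) else rar r) with
  | true => fun w => Vector.shiftin s w
  | false => fun w => w
  end.

Fixpoint tr (s : term far') (t : term far) : term far' :=
  match t with
  | Var x => Var x
  | App f v => App f (fadj f s (Vector.map (tr s) v))
  end.

(* variable bounds, for choosing fresh variables *)
Fixpoint tmaxv {fa} (t : term fa) : nat :=
  match t with
  | Var x => x
  | App f v => Vector.fold_right (fun u m => Nat.max (tmaxv u) m) v 0
  end.
Fixpoint dmaxv (p : dform) : nat :=
  match p with
  | dRel r v => Vector.fold_right (fun u m => Nat.max (tmaxv u) m) v 0
  | dEq t1 t2 => Nat.max (tmaxv t1) (tmaxv t2)
  | dNeg q => dmaxv q
  | dAnd q1 q2 => Nat.max (dmaxv q1) (dmaxv q2)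
  | dAll y q => Nat.max y (dmaxv q)
  | dK t q => Nat.max (tmaxv t) (dmaxv q)
  end.

(* tau_formula(s, .) ; the fresh variable for K_t q is larger than every
   variable occurring in s, t and q *)
Fixpoint tau_formula (s : term far') (p : dform) : aform :=
  match p with
  | dRel r v => aRel r (radj r s (Vector.map (tr s) v))
  | dEq t1 t2 => aEq (tr s t1) (tr s t2)
  | dNeg q => aNeg (tau_formula s q)
  | dAnd q1 q2 => aAnd (tau_formula s q1) (tau_formula s q2)
  | dAll x q => aAll x (tau_formula s q)
  | dK t q =>
      let x := S (Nat.max (tmaxv s) (Nat.max (tmaxv t) (dmaxv q))) in
      aEx x (aAnd (aEq (Var x) (tr s t))
                  (aAnd (aRel (Apred Σ) (Vector.const (Var x) (rar' (Apred Σ))))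
                        (aK (tau_formula (Var x) q))))
  end.

(* the constant symbol A as a Sigma'-term (acon A has arity 0, so the
   argument vector is empty) *)
Definition aconst (A : D) : term far' :=
  App (acon Σ A) (Vector.const (Var 0) (far' (acon Σ A))).

Definition tau_theory (T : dtheory) : aform -> Prop :=
  fun q => exists A, agent A /\ exists p, T A p /\ q = tau_formula (aconst A) p.

Definition tau_structure (fam : D -> SStr) : SStr' :=
  {| fint := fun f =>
       match fsubj f as b
             return Vector.t D (if b then S (far f) else far f) -> D with
       | true => fun v =>
           let d := Vector.last v in
           if EM (agent d) then fint (fam d) f (Vector.shiftout v) else delta
       | false => fun v => Iof Σ f v
       end;
     rint := fun r =>
       match rsubj r as b
             return Vector.t D (if b then S (rar r) else rar r) -> Prop with
       | true => fun v =>
           let d := Vector.last v in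
           agent d /\ rint (fam d) r (Vector.shiftout v)
       | false => fun v => Ior Σ r v
       end |}.

Definition tau_pws (Q : DPWS) : SStr' -> Prop :=
  fun J => exists fam : D -> SStr,
      (forall A, agent A -> Q A (fam A)) /\ J = tau_structure fam.

Definition tau_beliefpair (B : DBP) : ABP :=
  (tau_pws (fst B), tau_pws (snd B)).

Definition ABP_eq (P1 P2 : ABP) : Prop :=
  (forall J, fst P1 J <-> fst P2 J) /\ (forall J, snd P1 J <-> snd P2 J).

End DAEL.

(* Main.v *)
Require Import Defs.
From Stdlib Require Import Arith Lia Classical ClassicalEpsilon FunctionalExtensionality PropExtensionality Setoid Morphisms.
Set Warnings "-warn-library-file-stdlib-vector".
From Stdlib Require Vector.
Set Implicit Arguments.

Lemma tv_eq (x y : tv) : (x = tt_ <-> y = tt_) -> (x = ff_ <-> y = ff_) -> x = y.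
Proof. destruct x, y; intros [H1 H2] [H3 H4]; auto; try discriminate (H1 eq_refl);
  try discriminate (H2 eq_refl); try discriminate (H3 eq_refl); try discriminate (H4 eq_refl). Qed.

Lemma tglb_tt X (P : X -> Prop) g : tglb P g = tt_ <-> forall x, P x -> g x = tt_.
Proof. unfold tglb. destruct (EM _) as [h|h]; [tauto|]. destruct (EM _); split; intro; try discriminate; tauto. Qed.

Lemma tglb_ff X (P : X -> Prop) g : tglb P g = ff_ <-> exists x, P x /\ g x = ff_.
Proof. unfold tglb. destruct (EM _) as [h|h].
 - split; [discriminate|]. intros [x [Px gx]]. rewrite (h x Px) in gx. discriminate.
 - destruct (EM _); split; intro; try discriminate; tauto. Qed.

Lemma tmin_tt v w : tmin v w = tt_ <-> v = tt_ /\ w = tt_.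
Proof. unfold tmin. rewrite tglb_tt. split.
 - intro H. split; [apply (H true I) | apply (H false I)].
 - intros [H1 H2] [|] _; auto. Qed.

Lemma tmin_ff v w : tmin v w = ff_ <-> v = ff_ \/ w = ff_.
Proof. unfold tmin. rewrite tglb_ff. split.
 - intros [[|] [_ H]]; auto.
 - intros [H|H]; [exists true|exists false]; auto. Qed.

Lemma tinv_tt v : tinv v = tt_ <-> v = ff_.
Proof. destruct v; simpl; split; congruence. Qed.
Lemma tinv_ff v : tinv v = ff_ <-> v = tt_.
Proof. destruct v; simpl; split; congruence. Qed.
Lemma tbool_tt P : tbool P = tt_ <-> P.
Proof. unfold tbool; destruct (EM P); split; intro; try discriminate; tauto. Qed.
Lemma tbool_ff P : tbool P = ff_ <-> ~ P.
Proof. unfold tbool; destruct (EM P); split; intro; try discriminate; tauto. Qed.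
Lemma tbool_iff P Q : (P <-> Q) -> tbool P = tbool Q.
Proof. intro H. unfold tbool. destruct (EM P), (EM Q); tauto. Qed.
Lemma tglb_ext X (P : X -> Prop) g h : (forall x, g x = h x) -> tglb P g = tglb P h.
Proof. intro H. replace h with g; auto. apply functional_extensionality; auto. Qed.

Fixpoint vall {A n} (P : A -> Prop) (v : Vector.t A n) : Prop :=
  match v with Vector.nil _ => True | Vector.cons _ x _ w => P x /\ vall P w end.

Lemma shiftout_shiftin {A n} (a : A) (v : Vector.t A n) : Vector.shiftout (Vector.shiftin a v) = v.
Proof. induction v; simpl; f_equal; auto. Qed.

Lemma shiftin_shiftout {A n} (v : Vector.t A (S n)) : Vector.shiftin (Vector.last v) (Vector.shiftout v) = v.
Proof. induction n.
 - apply (Vector.caseS' v); intros h t. apply (Vector.case0 (fun t => _) ) with (v := t). reflexivity.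
 - apply (Vector.caseS' v); intros h t. simpl. f_equal. apply IHn. Qed.

Lemma map_const {A B} (f : A -> B) a n : Vector.map f (Vector.const a n) = Vector.const (f a) n.
Proof. induction n; simpl; f_equal; auto. Qed.

Lemma vec0_eq {A n} (H : n = 0) (v w : Vector.t A n) : v = w.
Proof. subst. apply (Vector.case0 (fun v => v = w)). apply (Vector.case0 (fun w => _ = w)). reflexivity. Qed.

Section TI.
Variable Σ : Setup.
Lemma term_ind' (fa : Fs Σ -> nat) (P : term Σ fa -> Prop) :
  (forall x, P (Var _ _ x)) -> (forall f v, vall P v -> P (App f v)) -> forall t, P t.
Proof. intros HV HA. fix IH 1. intros [x|f v]. apply HV. apply HA.
  revert v. generalize (fa f). fix IHv 2. intros n [|u m w]. exact I. split. apply IH. apply IHv. Qed.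
End TI.
Lemma if3_ext (P1 P2 Q1 Q2 : Prop) : (P1<->Q1) -> (P2<->Q2) ->
  (if EM P1 then tt_ else if EM P2 then ff_ else uu_) = (if EM Q1 then tt_ else if EM Q2 then ff_ else uu_).
Proof. intros. destruct (EM P1), (EM Q1); try tauto; destruct (EM P2), (EM Q2); tauto. Qed.

Section S.
Variable Σ : Setup.

Lemma map_fadj {X Y} (g : X -> Y) (f : Fs Σ) s w :
  Vector.map g (fadj Σ f s w) = fadj Σ f (g s) (Vector.map g w).
Proof. unfold fadj, far'. destruct (fsubj Σ f); auto. apply Vector.map_shiftin. Qed.

Lemma map_radj {X Y} (g : X -> Y) (r : Rs Σ) s w :
  Vector.map g (radj Σ r s w) = radj Σ r (g s) (Vector.map g w).
Proof. unfold radj, rar'. destruct (rsubj Σ r); auto. apply Vector.map_shiftin. Qed.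

Lemma fint_tau (fam : D Σ -> SStr Σ) f e w : agent Σ e -> is_structure (fam e) ->
  fint (tau_structure fam) f (fadj Σ f e w) = fint (fam e) f w.
Proof. intros Ha [Hf _]. unfold tau_structure, fadj; simpl; unfold far' in *.
  destruct (fsubj Σ f) eqn:E.
  - rewrite Vector.shiftin_last, shiftout_shiftin. destruct (EM _); tauto.
  - symmetry. apply Hf, E. Qed.

Lemma rint_tau (fam : D Σ -> SStr Σ) r e w : agent Σ e -> is_structure (fam e) ->
  (rint (tau_structure fam) r (radj Σ r e w) <-> rint (fam e) r w).
Proof. intros Ha [_ Hr]. unfold tau_structure, radj; simpl; unfold rar' in *.
  destruct (rsubj Σ r) eqn:E.
  - rewrite Vector.shiftin_last, shiftout_shiftin. tauto.
  - symmetry. apply Hr, E. Qed.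

Lemma teval_tr (fam : D Σ -> SStr Σ) (s : term Σ (far' Σ)) a :
  agent Σ (teval (tau_structure fam) a s) ->
  is_structure (fam (teval (tau_structure fam) a s)) ->
  forall t, teval (tau_structure fam) a (tr s t) = teval (fam (teval (tau_structure fam) a s)) a t.
Proof. intros Ha Hs. apply term_ind'.
  - reflexivity.
  - intros f v Hv. simpl. rewrite map_fadj. etransitivity. apply fint_tau; auto. f_equal.
    rewrite Vector.map_map. clear -Hv. induction v; simpl in *; f_equal; tauto. Qed.

Lemma teval_upd {fa ra} (I : Str Σ fa ra) : forall t a x e, tmaxv t < x ->
  teval I (upd Σ a x e) t = teval I a t.
Proof. intro t; induction t as [y|f v Hv] using term_ind'.
  - intros a x e H. simpl in *. unfold upd. destruct (Nat.eqb_spec y x); [lia|auto].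
  - intros a x e H. simpl in *. f_equal. induction v; simpl in *; auto.
    destruct Hv as [H1 H2]. f_equal. apply H1; lia. apply IHv; auto. lia. Qed.

Lemma upd_comm (a : nat -> D Σ) x y e e' : x <> y -> upd Σ (upd Σ a x e) y e' = upd Σ (upd Σ a y e') x e.
Proof. intro H. apply functional_extensionality. intro z. unfold upd.
  destruct (Nat.eqb_spec z y), (Nat.eqb_spec z x); subst; auto; congruence. Qed.

Lemma dval_upd (B : DBP Σ) : forall p I a x e, dmaxv p < x -> dval B p I (upd Σ a x e) = dval B p I a.
Proof. induction p; intros I a x e H; simpl in *.
  - apply tbool_iff. replace (Vector.map (teval I (upd Σ a x e)) t) with (Vector.map (teval I a) t). tauto.
    clear -H. induction t; simpl in *; auto. f_equal. symmetry. apply teval_upd; lia. apply IHt; lia.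
  - rewrite !teval_upd by lia. reflexivity.
  - rewrite IHp; auto.
  - rewrite IHp1, IHp2 by lia. auto.
  - apply tglb_ext. intro d. rewrite upd_comm by lia. apply IHp. lia.
  - rewrite teval_upd by lia.
    assert (HH: forall J, dval B p J (upd Σ a x e) = dval B p J a) by (intro; apply IHp; lia).
    apply if3_ext; setoid_rewrite HH; tauto. Qed.
End S.

Section S.
Variable Σ : Setup.



Lemma tau_aconst (fam : D Σ -> SStr Σ) a A : agent Σ A -> teval (tau_structure fam) a (aconst Σ A) = A.
Proof. intro HA. unfold aconst. simpl. generalize (Vector.map (teval (tau_structure fam) a)
      (Vector.const (Var Σ (far' Σ) 0) (far' Σ (acon Σ A)))).
  unfold tau_structure; simpl. unfold far'. generalize (acon_int Σ A HA). rewrite (acon_obj Σ A HA). simpl. auto. Qed.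

Lemma aconst_upd {ra} (J : Str Σ (far' Σ) ra) a y e A : agent Σ A ->
  teval J (upd Σ a y e) (aconst Σ A) = teval J a (aconst Σ A).
Proof. intro HA. unfold aconst; simpl. f_equal. apply vec0_eq.
  unfold far'. rewrite (acon_obj Σ A HA). apply (acon_ar Σ A HA). Qed.

Lemma apred_tau (fam : D Σ -> SStr Σ) e :
  rint (tau_structure fam) (Apred Σ) (Vector.const e (rar' Σ (Apred Σ))) <-> agent Σ e.
Proof. unfold tau_structure; simpl. unfold rar'. generalize (Apred_int Σ e). rewrite (Apred_obj Σ). simpl. auto. Qed.
End S.
Lemma apred_tau' Σ (fam : D Σ -> SStr Σ) a' y :
  rint (tau_structure fam) (Apred Σ) (Vector.map (teval (tau_structure fam) a') (Vector.const (Var Σ (far' Σ) y) (rar' Σ (Apred Σ)))) <-> agent Σ (a' y).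
Proof. rewrite map_const. apply apred_tau. Qed.

Lemma if3_tt (P1 P2 : Prop) : (if EM P1 then tt_ else if EM P2 then ff_ else uu_) = tt_ <-> P1.
Proof. destruct (EM P1); [tauto|]. destruct (EM P2); split; intro; try discriminate; tauto. Qed.
Lemma if3_ff (P1 P2 : Prop) : (if EM P1 then tt_ else if EM P2 then ff_ else uu_) = ff_ <-> ~P1 /\ P2.
Proof. destruct (EM P1); [split; [discriminate|tauto]|]. destruct (EM P2); split; intro; try discriminate; tauto. Qed.

Section S.
Variable Σ : Setup.
Variable B : DBP Σ.
Hypothesis HBs : DBP_structures B.
Hypothesis HBc : DBP_consistent B.
Hypothesis HBu : DBP_univ_consistent B.

Definition ext (e : D Σ) (I : SStr Σ) : D Σ -> SStr Σ := fun A =>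
  if EM (A = e) then I else
  match EM (exists I', snd B A I') with
  | left h => proj1_sig (constructive_indefinite_description _ h)
  | right _ => I end.

Lemma ext_e e I : ext e I e = I.
Proof. unfold ext. destruct (EM (e = e)); tauto. Qed.
Lemma ext_other e I A : agent Σ A -> A <> e -> snd B A (ext e I A).
Proof. intros HA Hne. unfold ext. destruct (EM (A = e)); [tauto|].
  destruct (EM _) as [h|h]. apply proj2_sig. exfalso. apply h, HBu, HA. Qed.

Definition s_good (p : dform Σ) (s : term Σ (far' Σ)) :=
  (exists A, agent Σ A /\ s = aconst Σ A) \/ (exists x, s = Var _ _ x /\ dmaxv p < x).

Lemma s_good_mono p q s : s_good p s -> dmaxv q <= dmaxv p -> s_good q s.
Proof. intros [H|[x [-> H]]] Hle; [left; auto | right; exists x; split; auto; lia]. Qed.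

Lemma s_good_upd p s fam a y e : s_good p s -> y <= dmaxv p ->
  teval (tau_structure fam) (upd Σ a y e) s = teval (tau_structure fam) a s.
Proof. intros [[A [HA ->]]|[x [-> H]]] Hy.
  - apply aconst_upd; auto.
  - simpl. unfold upd. destruct (Nat.eqb_spec x y); [lia|auto]. Qed.

Lemma key : forall p s fam a, (forall A, agent Σ A -> is_structure (fam A)) -> s_good p s ->
  agent Σ (teval (tau_structure fam) a s) ->
  aval (tau_beliefpair B) (tau_formula s p) (tau_structure fam) a
  = dval B p (fam (teval (tau_structure fam) a s)) a.
Proof. induction p; intros s fam a Hfam Hs Hag; remember (teval (tau_structure fam) a s) as d eqn:Hd.
  - subst d. cbn -[tau_structure]. apply tbool_iff. rewrite map_radj, Vector.map_map.
    rewrite (Vector.map_ext _ _ (fun u => teval (tau_structure fam) a (tr s u))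
      (teval (fam (teval (tau_structure fam) a s)) a)) by (intro; apply teval_tr; auto).
    apply rint_tau; auto.
  - subst d. cbn -[tau_structure]. apply tbool_iff. rewrite !teval_tr; auto. tauto.
  - simpl. f_equal. subst d. apply IHp; auto.
  - simpl in *. subst d. rewrite IHp1, IHp2; auto; try (eapply s_good_mono; [eauto|simpl; lia]).
  - cbn -[tau_structure tglb upd]. apply tglb_ext. intro e.
    rewrite IHp; auto.
    + rewrite s_good_upd with (p := dAll n p); simpl; subst; auto; lia.
    + eapply s_good_mono; eauto. simpl; lia.
    + rewrite s_good_upd with (p := dAll n p); simpl; subst; auto; lia.
  - cbn -[tau_structure tbool tmin tglb upd].
    set (x := S (Nat.max (tmaxv s) (Nat.max (tmaxv t) (dmaxv p)))).
    assert (Hxs : tmaxv s < x) by lia. assert (Hxt : tmaxv t < x) by lia. assert (Hxp : dmaxv p < x) by lia.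
    assert (F1 : forall e, teval (tau_structure fam) (upd Σ a x e) s = d).
    { intro e. rewrite Hd. destruct Hs as [[A [HA ->]] | [y [-> Hy]]].
      - apply aconst_upd; auto.
      - simpl in *. unfold upd. destruct (Nat.eqb_spec y x); [lia|auto]. }
    set (v := teval (fam d) a t).
    assert (F2 : forall e, teval (tau_structure fam) (upd Σ a x e) (tr s t) = v).
    { intro e. rewrite teval_tr; rewrite F1; auto. apply teval_upd; auto. }
    assert (Fx : forall e, upd Σ a x e x = e).
    { intro e. unfold upd. rewrite Nat.eqb_refl. auto. }
    assert (Hiv : forall fam' e, (forall A, agent Σ A -> is_structure (fam' A)) -> agent Σ e ->
      aval (tau_beliefpair B) (tau_formula (Var _ _ x) p) (tau_structure fam') (upd Σ a x e) = dval B p (fam' e) a).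
    { intros fam' e Hf' He. rewrite IHp; auto.
      - simpl. rewrite Fx. apply dval_upd; auto.
      - right. exists x. auto.
      - simpl. rewrite Fx. auto. }
    assert (Hext : forall e I, agent Σ e -> (fst B e I \/ snd B e I) ->
       forall A, agent Σ A -> is_structure (ext e I A)).
    { intros e I He HI A HA. destruct (EM (A = e)) as [->|Hne].
      - rewrite ext_e. eapply HBs; eauto.
      - eapply HBs; eauto. right. apply ext_other; auto. }
    assert (C1 : forall e, agent Σ e ->
      ((forall J', tau_pws (fst B) J' -> aval (tau_beliefpair B) (tau_formula (Var _ _ x) p) J' (upd Σ a x e) = tt_)
       <-> (forall I, fst B e I -> dval B p I a = tt_))).
    { intros e He. split.
      - intros H I HI. specialize (H (tau_structure (ext e I))). rewrite Hiv, ext_e in H; auto.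
        apply H. exists (ext e I). split; auto. intros A HA. destruct (EM (A = e)) as [->|Hne].
        + rewrite ext_e; auto.
        + apply HBc; auto. apply ext_other; auto.
      - intros H J' [fam' [Hf' ->]]. rewrite Hiv; auto. intros A HA. eapply HBs; eauto. }
    assert (C2 : forall e, agent Σ e ->
      ((exists J', tau_pws (snd B) J' /\ aval (tau_beliefpair B) (tau_formula (Var _ _ x) p) J' (upd Σ a x e) = ff_)
       <-> (exists I, snd B e I /\ dval B p I a = ff_))).
    { intros e He. split.
      - intros [J' [[fam' [Hf' ->]] H]]. rewrite Hiv in H; [eauto | intros A HA; eapply HBs; [eauto| right; apply Hf'; auto] | auto].
      - intros [I [HI H]]. exists (tau_structure (ext e I)). split.
        + exists (ext e I). split; auto. intros A HA. destruct (EM (A = e)) as [->|Hne].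
          * rewrite ext_e; auto.
          * apply ext_other; auto.
        + rewrite Hiv, ext_e; auto. }
    apply tv_eq.
    + rewrite tinv_tt, tglb_ff, if3_tt. split.
      * intros [e [_ He]]. rewrite tinv_ff, !tmin_tt, !tbool_tt, if3_tt, apred_tau', Fx, F2 in He.
        destruct He as [E1 [E2 E3]]. subst e. split; auto. apply C1; auto.
      * intros [Hv H]. exists v. split; auto. rewrite tinv_ff, !tmin_tt, !tbool_tt, if3_tt, apred_tau', Fx, F2.
        split; auto. split; auto. apply C1; auto.
    + rewrite tinv_ff, tglb_tt, if3_ff. split.
      * intro H. specialize (H v I). rewrite tinv_tt, !tmin_ff, !tbool_ff, if3_ff, apred_tau', Fx, F2 in H.
        destruct (classic (agent Σ v)) as [Hv|Hv]; [|tauto]. rewrite C1, C2 in H by auto. tauto.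
      * intros H e _. rewrite tinv_tt, !tmin_ff, !tbool_ff, if3_ff, apred_tau', Fx, F2.
        destruct (classic (e = v)) as [->|]; [|tauto]. destruct (classic (agent Σ v)) as [Hv|Hv]; [|tauto].
        rewrite C1, C2 by auto. tauto.
Qed.
End S.

Section E.
Variable Σ : Setup.

Definition fam_of (J : SStr' Σ) (d : D Σ) : SStr Σ :=
  {| fint := fun f w =>
       (match fsubj Σ f as b return (Vector.t (D Σ) (if b then S (far Σ f) else far Σ f) -> D Σ) -> D Σ with
        | true => fun g => g (Vector.shiftin d w)
        | false => fun _ => Iof Σ f w end) (fint J f);
     rint := fun r w =>
       (match rsubj Σ r as b return (Vector.t (D Σ) (if b then S (rar Σ r) else rar Σ r) -> Prop) -> Prop with
        | true => fun g => g (Vector.shiftin d w)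
        | false => fun _ => Ior Σ r w end) (rint J r) |}.

Lemma fam_of_struct J d : is_structure (fam_of J d).
Proof. split.
  - intros f Hf v. simpl. generalize (fint J f). unfold far'. rewrite Hf. reflexivity.
  - intros r Hr v. simpl. generalize (rint J r). unfold rar'. rewrite Hr. tauto. Qed.

Lemma J_eq J : is_structure' J -> J = tau_structure (fam_of J).
Proof. destruct J as [fJ rJ]. intros [Hf Hr]. unfold tau_structure. f_equal.
  - apply functional_extensionality_dep. intro f. specialize (Hf f). simpl in *.
    revert Hf. generalize (fJ f). unfold fcond', far'. destruct (fsubj Σ f); intros g H;
      apply functional_extensionality; intro v.
    + destruct (EM (agent Σ (Vector.last v))).
      * rewrite shiftin_shiftout. reflexivity.
      * apply H; auto.
    + apply H.
  - apply functional_extensionality_dep. intro r. specialize (Hr r). simpl in *.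
    revert Hr. generalize (rJ r). unfold rcond', rar'. destruct (rsubj Σ r); intros g H;
      apply functional_extensionality; intro v; apply propositional_extensionality.
    + rewrite shiftin_shiftout. split.
      * intro Hg. split; auto. destruct (classic (agent Σ (Vector.last v))); auto. exfalso; eapply H; eauto.
      * tauto.
    + apply H. Qed.

Lemma tau_struct' (fam : D Σ -> SStr Σ) : is_structure' (tau_structure fam).
Proof. split.
  - intro f. unfold fcond', tau_structure; simpl. unfold far'. destruct (fsubj Σ f).
    + intros v Hn. destruct (EM _); tauto.
    + reflexivity.
  - intro r. unfold rcond', tau_structure; simpl. unfold rar'. destruct (rsubj Σ r).
    + intros v Hn [H _]; tauto.
    + tauto. Qed.

Variable B : DBP Σ.
Hypothesis HBs : DBP_structures B.
Hypothesis HBc : DBP_consistent B.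
Hypothesis HBu : DBP_univ_consistent B.
Variable T : dtheory Σ.

Lemma val_eq fam A p : (forall A, agent Σ A -> is_structure (fam A)) -> agent Σ A ->
  aval (tau_beliefpair B) (tau_formula (aconst Σ A) p) (tau_structure fam) (a0 Σ) = dval B p (fam A) (a0 Σ).
Proof. intros Hf HA. rewrite key; auto.
  - rewrite tau_aconst; auto.
  - left; eauto.
  - rewrite tau_aconst; auto. Qed.

Lemma aset_tt fam : (forall A, agent Σ A -> is_structure (fam A)) ->
  (aset_val (tau_beliefpair B) (tau_theory T) (tau_structure fam) = tt_ <->
   forall A, agent Σ A -> dset_val B (T A) (fam A) = tt_).
Proof. intro Hf. unfold aset_val, dset_val. setoid_rewrite tglb_tt. split.
  - intros H A HA p Hp. rewrite <- val_eq; auto. apply H. unfold tau_theory. eauto 6.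
  - intros H q [A [HA [p [Hp ->]]]]. rewrite val_eq; auto. Qed.

Lemma aset_ff fam : (forall A, agent Σ A -> is_structure (fam A)) ->
  (aset_val (tau_beliefpair B) (tau_theory T) (tau_structure fam) = ff_ <->
   exists A, agent Σ A /\ dset_val B (T A) (fam A) = ff_).
Proof. intro Hf. unfold aset_val, dset_val. setoid_rewrite tglb_ff. split.
  - intros [q [[A [HA [p [Hp ->]]]] H]]. rewrite val_eq in H; eauto.
  - intros [A [HA [p [Hp H]]]]. exists (tau_formula (aconst Σ A) p). split.
    + unfold tau_theory; eauto.
    + rewrite val_eq; auto. Qed.

Lemma main_thm : ABP_eq (tau_beliefpair (Dstar T B)) (Dstar' (tau_theory T) (tau_beliefpair B)).
Proof. split; intro J; split.
  - intros [fam [Hf ->]]. assert (Hs : forall A, agent Σ A -> is_structure (fam A)) by (intros; apply Hf; auto).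
    split. apply tau_struct'. intro Hff. apply aset_ff in Hff; [|exact Hs]. destruct Hff as [A [HA H]].
    apply (Hf A HA); auto.
  - intros [HJ Hne]. exists (fam_of J). split.
    + intros A HA. split. apply fam_of_struct. intro Hff. apply Hne. rewrite (J_eq HJ).
      apply aset_ff; [intros; apply fam_of_struct|eauto].
    + apply J_eq; auto.
  - intros [fam [Hf ->]]. assert (Hs : forall A, agent Σ A -> is_structure (fam A)) by (intros; apply Hf; auto).
    split. apply tau_struct'. apply aset_tt; [exact Hs|]. intros A HA. apply Hf; auto.
  - intros [HJ Htt]. exists (fam_of J). split.
    + intros A HA. split. apply fam_of_struct. rewrite (J_eq HJ) in Htt.
      exact (proj1 (aset_tt (fam_of J) (fun A _ => fam_of_struct J A)) Htt A HA).
    + apply J_eq; auto. Qed.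
End E.

Theorem mainTheorem11 (Σ : Setup) (T : dtheory Σ) (B : DBP Σ) :
  dtheory_sentences T ->
  DBP_structures B ->
  DBP_consistent B ->
  DBP_univ_consistent B ->
  ABP_eq (tau_beliefpair (Dstar T B))
         (Dstar' (tau_theory T) (tau_beliefpair B)).
Proof.
  intros _ Hs Hc Hu. apply main_thm; assumption.
Qed.
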